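(* Let $D$ be a regular semisimple matrix in $\mathrm{SL}_n(\mathbf k)$ with no eigenvalue equal to $1$, and let $P\subset\mathrm{SL}_n$ be the parabolic subgroup fixing a line $l\subset\mathbf k^n$, with unipotent radical $U_P$. If there exist matrices $M,N$ with $M$ unipotent, $N\in U_P(\mathbf k)$ and $NM=D$, then $l$ contains a cyclic vector for $D$. Moreover, for a given $l$, such a pair $(M,N)$, if it exists, is unique.
   Context: $\mathbf k$ is an algebraically closed field. A vector $v$ is cyclic for $D$ if $v,Dv,\dots,D^{n-1}v$ span $\mathbf k^n$. *)

(* Defs.v *)
From HB Require Import structures.
From mathcomp Require Import all_boot all_order all_algebra.
Set Implicit Arguments. Unset Strict Implicit. Unset Printing Implicit Defensive.
Import GRing.Theory.
Local Open Scope ring_scope.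

Definition regular_semisimple (F : fieldType) (n : nat) (A : 'M[F]_n) : Prop :=
  exists (P : 'M[F]_n) (d : 'rV[F]_n),
    P \in unitmx /\ injective (fun i : 'I_n => d 0 i) /\
    A = invmx P *m diag_mx d *m P.

Definition in_SL (F : fieldType) (n : nat) (A : 'M[F]_n) : Prop := \det A = 1.

Definition unipotent (F : fieldType) (n : nat) (A : 'M[F]_n) : Prop :=
  exists k : nat, (A - 1%:M) ^+ k = 0.

Definition in_line (F : fieldType) (n : nat) (w v : 'cV[F]_n) : Prop :=
  exists c : F, v = c *: w.

Definition in_parabolic (F : fieldType) (n : nat) (w : 'cV[F]_n) (g : 'M[F]_n) : Prop :=
  in_SL g /\ forall v, in_line w v -> in_line w (g *m v).

(* U_P = unipotent radical of P: the elements of P acting trivially on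
   l and on k^n / l. *)
Definition in_unip_radical (F : fieldType) (n : nat) (w : 'cV[F]_n) (g : 'M[F]_n) : Prop :=
  in_parabolic w g /\
  (forall v, in_line w v -> g *m v = v) /\
  (forall x : 'cV[F]_n, in_line w (g *m x - x)).

Definition cyclic_vector (F : fieldType) (n : nat) (D : 'M[F]_n) (v : 'cV[F]_n) : Prop :=
  row_full (\matrix_(i < n) (D ^+ i *m v)^T).

(* Main.v *)
Require Import Defs.
From HB Require Import structures.
From mathcomp Require Import all_boot all_order all_algebra.
From mathcomp Require Import zify.
Set Implicit Arguments. Unset Strict Implicit. Unset Printing Implicit Defensive.
Import GRing.Theory.
Local Open Scope ring_scope.

Section Helpers.
Variables (F : fieldType) (n : nat).
Local Notation N := n.+1.
Implicit Types (X Y E Z : 'M[F]_N) (w : 'cV[F]_N) (v u f : 'rV[F]_N).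

Definition Kr X w : 'M[F]_N := \matrix_(i < N) (X ^+ i *m w)^T.

Lemma KrT_entry X w f (i : 'I_N) : (f *m (Kr X w)^T) 0 i = (f *m X ^+ i *m w) 0 0.
Proof.
rewrite -mulmxA !mxE; apply: eq_bigr => j _; rewrite !mxE.
done.
Qed.

Lemma horner_mx_sum X p : horner_mx X p = \sum_(i < size p) p`_i *: X ^+ i.
Proof.
rewrite -{1}[p]coefK poly_def linear_sum; apply: eq_bigr => i _.
by rewrite linearZ /= rmorphXn /= horner_mx_X.
Qed.

Lemma krylov_CH X w v : (forall i, (i < N)%N -> v *m X ^+ i *m w = 0) ->
  forall i, v *m X ^+ i *m w = 0.
Proof.
move=> H i.
have -> : X ^+ i = horner_mx X ('X^i %% char_poly X).
  rewrite -[in LHS](horner_mx_X X) -rmorphXn /=.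
  rewrite {1}(Pdiv.Field.divp_eq 'X^i (char_poly X)) rmorphD rmorphM /= Cayley_Hamilton.
  by rewrite mulr0 add0r.
have hs : (size ('X^i %% char_poly X)%R <= N)%N.
  have := ltn_modp ('X^i) (char_poly X).
  by rewrite -size_poly_eq0 size_char_poly /= => h; rewrite -ltnS h.
rewrite horner_mx_sum mulmx_sumr mulmx_suml big1 // => j _.
by rewrite -scalemxAr -scalemxAl H ?scaler0 // (leq_trans (ltn_ord j) hs).
Qed.

Lemma eS (A : 'M[F]_N) k : A ^+ k.+1 = A *m A ^+ k.
Proof. by rewrite exprS. Qed.

Lemma eSr (A : 'M[F]_N) k : A ^+ k.+1 = A ^+ k *m A.
Proof. by rewrite exprSr. Qed.

Lemma eD (A : 'M[F]_N) a b : A ^+ a *m A ^+ b = A ^+ (a + b).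
Proof. by rewrite exprD. Qed.

Lemma agree_shift X Y w v :
  (forall u, u *m w = 0 -> u *m Y = u *m X) ->
  (forall i, v *m X ^+ i *m w = 0) ->
  forall k c, v *m (Y - c%:M) ^+ k = v *m (X - c%:M) ^+ k.
Proof.
move=> Hag Hv k c; elim: k v Hv => [|k IH] v Hv; first by rewrite !expr0.
rewrite !eS !mulmxA.
have -> : v *m (Y - c%:M) = v *m (X - c%:M).
  by rewrite !mulmxBr Hag // -(Hv 0%N) expr0 mulmx1.
apply: IH => i.
rewrite mulmxBr !mulmxBl mul_mx_scalar -scalemxAl -scalemxAl Hv scaler0 subr0.
by rewrite -mulmxA -mulmxA (mulmxA X) -eS mulmxA Hv.
Qed.


Lemma not_cyclic X w : ~~ row_full (Kr X w) ->
  exists2 v : 'rV[F]_N, v != 0 & forall i, (i < N)%N -> v *m X ^+ i *m w = 0.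
Proof.
rewrite row_full_unit unitmxE unitfE negbK -det_tr => /det0P [v vn0 hv].
exists v => // i hi; apply/matrixP => a b; rewrite !ord1.
have := congr1 (fun M : 'rV_N => M 0 (Ordinal hi)) hv.
by rewrite KrT_entry /= !mxE.
Qed.

Lemma cyclic_dual X w (r : 'I_N) : row_full (Kr X w) ->
  exists f : 'rV[F]_N, forall i : 'I_N, f *m X ^+ i *m w = (i == r)%:R%:M.
Proof.
rewrite row_full_unit -unitmx_tr => hu.
exists (delta_mx 0 r *m invmx (Kr X w)^T) => i.
apply/matrixP => a b; rewrite !ord1.
rewrite -KrT_entry -mulmxA mulVmx // mulmx1 !mxE eqxx /= mulr1n.
by rewrite eq_sym.
Qed.

Lemma cyclic_zero X w Z : row_full (Kr X w) ->
  (forall i, (i < N)%N -> Z *m (X ^+ i *m w) = 0) -> Z = 0.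
Proof.
rewrite row_full_unit -unitmx_tr => hu H.
have h0 : Z *m (Kr X w)^T = 0.
  apply/matrixP => a i.
  have := congr1 (fun M : 'cV_N => M a 0) (H i (ltn_ord i)).
  rewrite !mxE => h; apply: (etrans _ h).
  by apply: eq_bigr => j _; rewrite /Kr !mxE.
by rewrite -(mulmxK hu Z) h0 mul0mx.
Qed.

Lemma eig_of_nil D v k : v != 0 -> v *m (D - 1%:M) ^+ k = 0 -> eigenvalue D 1.
Proof.
elim: k v => [|k IH] v vn0; first by rewrite expr0 mulmx1 => h; rewrite h eqxx in vn0.
rewrite eS mulmxA.
have [h0|hn0] := eqVneq (v *m (D - 1%:M)) 0; last by apply: IH.
move=> _; apply/eigenvalueP; exists v => //.
by move: h0; rewrite mulmxBr mulmx1 scale1r => /eqP; rewrite subr_eq0 => /eqP.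
Qed.

Lemma nil_index E k : E ^+ k = 0 -> E ^+ N = 0.
Proof.
move=> Ek.
have hd : mxminpoly E %| ('X - 0%:P) ^+ k.
  by apply: mxminpoly_min; rewrite subr0 rmorphXn /= horner_mx_X.
have /dvdp_exp_XsubCP [m lemk hm] := hd.
have ep : mxminpoly E = ('X - 0%:P) ^+ m.
  by apply/eqP; rewrite -eqp_monic ?mxminpoly_monic ?monic_exp ?monicXsubC.
have hsz : (m <= N)%N.
  have := dvdp_leq (monic_neq0 (char_poly_monic E)) (mxminpoly_dvd_char E).
  by rewrite ep size_exp_XsubC size_char_poly.
have : horner_mx E (('X - 0%:P) ^+ N) = 0.
  by apply/mxminpoly_minP; rewrite ep dvdp_exp2l.
by rewrite subr0 rmorphXn /= horner_mx_X.
Qed.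

Lemma telescope E E0 K : E ^+ K - E0 ^+ K =
  \sum_(i < K) E ^+ (K.-1 - i) *m (E - E0) *m E0 ^+ i.
Proof.
elim: K => [|K IH]; first by rewrite !expr0 subrr big_ord0.
rewrite big_ord_recr /= subnn expr0 mul1mx.
have -> : \sum_(i < K) E ^+ (K - i) *m (E - E0) *m E0 ^+ i =
          E *m \sum_(i < K) E ^+ (K.-1 - i) *m (E - E0) *m E0 ^+ i.
  rewrite mulmx_sumr; apply: eq_bigr => i _.
  have -> : (K - i = (K.-1 - i).+1)%N by have := ltn_ord i; lia.
  by rewrite eS !mulmxA.
rewrite -IH mulmxBr mulmxBl -!eS eSr; rewrite addrA; congr (_ + _).
by rewrite subrK.
Qed.


Lemma uniq_core E E0 w : E ^+ N = 0 -> E0 ^+ N = 0 -> row_full (Kr E w) ->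
  row_full (Kr E0 w) -> (forall x : 'cV[F]_N, in_line w ((E - E0) *m x)) -> E = E0.
Proof.
move=> hE hE0 cE cE0 hl.
apply/eqP; rewrite -subr_eq0; apply/eqP.
apply: (cyclic_zero cE0) => j.
elim/ltn_ind: j => j IH hj.
have [f hf] := cyclic_dual ord_max cE.
have [cj hcj] := hl (E0 ^+ j *m w).
have T := telescope E E0 N.
rewrite hE hE0 subrr /= in T.
have := congr1 (fun M => f *m E ^+ j *m M *m w) T.
rewrite /= mulmx0 mul0mx mulmx_sumr mulmx_suml (bigD1 (Ordinal hj)) //= big1.
  rewrite -!mulmxA (mulmxA (E ^+ j)) eD subnKC; last first.
    by rewrite -ltnS.
  rewrite hcj -!scalemxAr mulmxA (hf ord_max) eqxx addr0 => /esym h.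
  have : cj = 0.
    by have := congr1 (fun M : 'M[F]_1 => M 0 0) h; rewrite !mxE /= mulr1.
  by move=> c0; rewrite c0 scale0r.
move=> i hi.
case: (ltngtP i j) => hij.
- by rewrite -!mulmxA IH // mulmx0 !mulmx0.
- have [ci hci] := hl (E0 ^+ i *m w).
  rewrite -!mulmxA hci -!scalemxAr (mulmxA (E ^+ j)) eD.
  have hlt : (j + (n - i) < N)%N by have := ltn_ord i; lia.
  rewrite mulmxA (hf (Ordinal hlt)) /=.
  have -> : (Ordinal hlt == ord_max) = false.
    apply/negbTE; rewrite -val_eqE /=; have := ltn_ord i; lia.
  by rewrite raddf0 scaler0.
- by move: hi; rewrite -val_eqE /= hij eqxx.
Qed.

End Helpers.
Theorem mainTheorem12 (k : closedFieldType) (n : nat) (D : 'M[k]_n) (w : 'cV[k]_n) :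
  in_SL D -> regular_semisimple D -> ~~ eigenvalue D 1 -> w != 0 ->
  (forall M N : 'M[k]_n, unipotent M -> in_unip_radical w N -> N *m M = D ->
     exists v, in_line w v /\ cyclic_vector D v) /\
  (forall M N M' N' : 'M[k]_n,
     unipotent M -> in_unip_radical w N -> N *m M = D ->
     unipotent M' -> in_unip_radical w N' -> N' *m M' = D ->
     M = M' /\ N = N').
Proof.
move=> hSL _ hne1 wn0.
case: n D w hSL hne1 wn0 => [|n] D w hSL hne1 wn0.
  by rewrite flatmx0 eqxx in wn0.
have rowN : forall Nm : 'M[k]_n.+1, in_unip_radical w Nm ->
    forall u : 'rV_n.+1, u *m w = 0 -> u *m Nm = u.
  move=> Nm [_ [_ h3]] u uw; apply/rowP => j.
  have [c hc] := h3 (delta_mx j 0).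
  have e : Nm *m delta_mx j 0 = c *: w + delta_mx j 0 by rewrite -hc subrK.
  have := congr1 (fun M : 'M[k]_1 => M 0 0) (congr1 (mulmx u) e).
  rewrite mulmxDr -scalemxAr uw scaler0 add0r mulmxA -!colE !mxE.
  done.
have agreeD : forall Mm Nm : 'M[k]_n.+1, in_unip_radical w Nm -> Nm *m Mm = D ->
    forall u : 'rV_n.+1, u *m w = 0 -> u *m D = u *m Mm.
  by move=> Mm Nm hN hNM u uw; rewrite -hNM mulmxA (rowN _ hN u uw).
split.
  move=> M Nm [kk hk] hN hNM; exists w; split; first by exists 1; rewrite scale1r.
  change (row_full (Kr D w)).
  case: (boolP (row_full (Kr D w))) => // /not_cyclic [v vn0 hv].
  have := agree_shift (X:=D) (Y:=M) (fun u uw => esym (agreeD M Nm hN hNM u uw))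
     (krylov_CH hv) kk 1.
  rewrite hk mulmx0 => /esym h.
  by have := eig_of_nil vn0 h; rewrite (negbTE hne1).
move=> M Nm M' Nm' [kk hk] hN hNM [kk' hk'] hN' hNM'.
have cyc : forall (Mm Nn : 'M[k]_n.+1) kk, (Mm - 1%:M) ^+ kk = 0 ->
    in_unip_radical w Nn -> Nn *m Mm = D -> row_full (Kr (Mm - 1%:M) w).
  move=> Mm Nn k0 hk0 hNn hNMm.
  case: (boolP (row_full _)) => // /not_cyclic [v vn0 hv].
  have ag : forall u : 'rV_n.+1, u *m w = 0 -> u *m (D - 1%:M) = u *m (Mm - 1%:M).
    by move=> u uw; rewrite !mulmxBr (agreeD Mm Nn hNn hNMm u uw).
  have := agree_shift ag (krylov_CH hv) k0 0.
  rewrite raddf0 !subr0 hk0 mulmx0 => h.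
  by have := eig_of_nil vn0 h; rewrite (negbTE hne1).
have eq1 : M - 1%:M = M' - 1%:M.
  apply: (uniq_core (nil_index hk) (nil_index hk') (cyc _ _ _ hk hN hNM)
    (cyc _ _ _ hk' hN' hNM')) => x.
  rewrite (_ : M - 1%:M - (M' - 1%:M) = M - M'); last by rewrite opprB addrA subrK.
  have [c1 h1] := hN.2.2 (M *m x).
  have [c2 h2] := hN'.2.2 (M' *m x).
  exists (c2 - c1); rewrite mulmxBl.
  have e1 : M *m x = D *m x - c1 *: w by rewrite -h1 -hNM -mulmxA opprB addrC subrK.
  have e2 : M' *m x = D *m x - c2 *: w by rewrite -h2 -hNM' -mulmxA opprB addrC subrK.
  by rewrite e1 e2 scalerBl opprB addrC addrA subrK.
have eM : M = M' by rewrite -(subrK 1%:M M) eq1 subrK.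
split => //.
rewrite -eM in hNM'.
have hu : M \in unitmx.
  rewrite unitmxE unitfE; apply/eqP => h0.
  have := det_mulmx Nm M; rewrite hNM hSL h0 mulr0 => /eqP; rewrite oner_eq0.
  done.
by rewrite -(mulmxK hu Nm) -(mulmxK hu Nm') hNM hNM'.
Qed.
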